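(* Let $n\ge 2$ and let $P=(P_1,\dots,P_t)$ be a partition of $\{1,\dots,n+1\}$; put $n_i=|P_i|$ and, for $u\ge 1$, let $m_u$ be the number of parts of size $u$. Then $$|Aut({\cal K}(P))|=\Big(\prod_{i=1}^t (n_i+1)!\Big)\prod_{u\ge 1} m_u!\,.$$
   Context: For a partition $P=(P_1,\dots,P_t)$ of $\{1,\dots,n+1\}$, ${\cal K}(P)$ is the simplicial complex on the vertex set $\{1,\dots,n+1\}\cup\{p_1,\dots,p_t\}$ ($t$ new vertices) whose $n$-faces are the sets $\{y_1,\dots,y_{n+1}\}$ with, for each $i$, $y_i=i$ or $y_i=p_j$ where $i\in P_j$, subject to the $y_i$ being pairwise distinct; its faces are all nonempty subsets of these. $Aut({\cal K})$ is the group of permutations of the vertices of ${\cal K}$ mapping the set of faces onto itself. *)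

(* Defs.v *)
From mathcomp Require Import all_boot all_fingroup.
Set Implicit Arguments. Unset Strict Implicit. Unset Printing Implicit Defensive.

(* The complex K(P) for n+1 original vertices ('I_n.+1, i.e. {1..n+1} shifted
   to {0..n}) and a partition into t parts given by a surjective labelling
   f : 'I_n.+1 -> 'I_t (part P_j = f^-1(j)).  Vertices: inl i = original
   vertex i, inr j = new vertex p_j. *)
Definition vert (n t : nat) := ('I_n.+1 + 'I_t)%type.

Definition ychoice n t (f : 'I_n.+1 -> 'I_t) (c : {ffun 'I_n.+1 -> bool})
  (i : 'I_n.+1) : vert n t :=
  if c i then inr (f i) else inl i.

Definition yset n t (f : 'I_n.+1 -> 'I_t) (c : {ffun 'I_n.+1 -> bool})
  : {set vert n t} := [set ychoice f c i | i : 'I_n.+1].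

Definition is_facet n t (f : 'I_n.+1 -> 'I_t) (A : {set vert n t}) : bool :=
  [exists c : {ffun 'I_n.+1 -> bool},
     injectiveb (ychoice f c) && (A == yset f c)].

Definition is_face n t (f : 'I_n.+1 -> 'I_t) (A : {set vert n t}) : bool :=
  (A != set0) && [exists B : {set vert n t}, is_facet f B && (A \subset B)].

Definition is_aut n t (f : 'I_n.+1 -> 'I_t) (s : {perm vert n t}) : bool :=
  [forall A : {set vert n t}, is_face f (s @: A) == is_face f A].

Definition AutK n t (f : 'I_n.+1 -> 'I_t) : {set {perm vert n t}} :=
  [set s | is_aut f s].

Definition part_size n t (f : 'I_n.+1 -> 'I_t) (j : 'I_t) : nat :=
  #|[set i | f i == j]|.

Definition mult n t (f : 'I_n.+1 -> 'I_t) (u : nat) : nat :=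
  #|[set j | part_size f j == u]|.

(* Main.v *)
Require Import Defs.
From mathcomp Require Import all_boot all_fingroup.
Set Implicit Arguments. Unset Strict Implicit. Unset Printing Implicit Defensive.

Definition Qs (X Y : finType) (h : X -> Y) (D : {set Y}) : {set {perm X}} :=
  [set s : {perm X} | perm_on (h @^-1: D) s && [forall x, h (s x) == h x]].

Lemma Qs_group_set (X Y : finType) (h : X -> Y) D : group_set (Qs h D).
Proof.
apply/group_setP; split.
  by rewrite inE perm_on1; apply/forallP => x; rewrite perm1.
move=> s t; rewrite !inE => /andP[ps /forallP hs] /andP[pt /forallP ht].
rewrite perm_onM //; apply/forallP => x; rewrite permM.
by rewrite (eqP (ht _)) (eqP (hs _)).
Qed.

Canonical Qs_group (X Y : finType) (h : X -> Y) D := Group (Qs_group_set h D).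

Lemma Lcount (X Y : finType) (h : X -> Y) :
  #|[set s : {perm X} | [forall x, h (s x) == h x]]| =
  \prod_(y : Y) #|[set x | h x == y]|`!.
Proof.
suff H : forall k (D : {set Y}), #|D| = k ->
   #|Qs h D| = \prod_(y in D) #|[set x | h x == y]|`!.
  have -> : [set s : {perm X} | [forall x, h (s x) == h x]] = Qs h setT.
    apply/setP => s; rewrite !inE preimsetT.
    by have -> : perm_on setT s by apply/subsetP=> x; rewrite inE.
  by rewrite (H _ _ (erefl _)); apply: eq_bigl => y; rewrite inE.
elim=> [|k IH] D cD.
  move/eqP: cD; rewrite cards_eq0 => /eqP ->; rewrite big_set0.
  suff -> : Qs h set0 = 1%g by rewrite cards1.
  apply/trivgP/subsetP => s; rewrite !inE => /andP[ps _].
  apply/eqP/permP => x; rewrite perm1; apply: (out_perm ps).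
  by rewrite inE inE.
have [y yD] : exists y, y \in D.
  by apply/set0Pn; rewrite -cards_eq0 cD.
rewrite (bigD1 y) //=.
set F := [set x | h x == y].
set D' := D :\ y.
have cD' : #|D'| = k by move: cD; rewrite (cardsD1 y D) yD => -[].
have -> : \prod_(i in D | i != y) #|[set x | h x == i]|`! =
          \prod_(i in D') #|[set x | h x == i]|`!.
  by apply: eq_bigl => i; rewrite !inE andbC.
rewrite -(IH D' cD') -card_Sym.
have TI : Sym F :&: Qs h D' = 1%g.
  apply/trivgP/subsetP => s; rewrite !inE => /andP[pF /andP[pD _]].
  apply/eqP/permP => x; rewrite perm1; apply/eqP/negPn/negP => sx.
  have xF : x \in F by apply: (subsetP pF); rewrite inE.
  have xD : x \in h @^-1: D' by apply: (subsetP pD); rewrite inE.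
  by move: xF xD; rewrite !inE => /eqP ->; rewrite eqxx.
rewrite -(TI_cardMg TI); congr #|_|.
suff E : (Sym F * Qs h D')%g == Qs h D by rewrite (eqP E).
rewrite eqEsubset; apply/andP; split.
  apply/subsetP => st /mulsgP[a b]; rewrite !inE => pa /andP[pb /forallP hb] ->.
  have ha : forall x, h (a x) = h x.
    move=> x; case xF: (x \in F).
      by have := xF; rewrite inE => /eqP ->; move: xF; rewrite -(perm_closed _ pa) inE => /eqP ->.
    by rewrite (out_perm pa) // xF.
  apply/andP; split; last first.
    by apply/forallP => x; rewrite permM (eqP (hb _)) ha.
  apply: perm_onM.
    apply: subset_trans pa _; apply/subsetP => x; rewrite !inE => /eqP ->; exact: yD.
  apply: subset_trans pb _; apply/subsetP => x; rewrite !inE. by case/andP.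

apply/subsetP => s; rewrite inE => /andP[ps /forallP hs].
have hs' : forall x, h (s x) = h x by move=> x; apply/eqP.
pose a0 x := if h x == y then s x else x.
pose b0 x := if h x == y then x else s x.
have a0i : injective a0.
  move=> x1 x2; rewrite /a0; case: ifP => e1; case: ifP => e2.
  - exact: perm_inj.
  - by move=> /(congr1 h); rewrite ?hs' => E; move: e1 e2; rewrite E => ->.
  - by move=> /(congr1 h); rewrite ?hs' => E; move: e1 e2; rewrite E => ->.
  - by [].
have b0i : injective b0.
  move=> x1 x2; rewrite /b0; case: ifP => e1; case: ifP => e2.
  - by [].
  - by move=> /(congr1 h); rewrite ?hs' => E; move: e1 e2; rewrite E => ->.
  - by move=> /(congr1 h); rewrite ?hs' => E; move: e1 e2; rewrite E => ->.
  - exact: perm_inj.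
have -> : s = (perm a0i * perm b0i)%g.
  apply/permP => x; rewrite permM !permE /a0 /b0.
  by case E: (h x == y); rewrite ?hs' ?E.
apply: mem_mulg; rewrite !inE.
  apply/subsetP => x; rewrite !inE permE /a0; case: ifP => //.
  by rewrite eqxx.
apply/andP; split.
  apply/subsetP => x; rewrite !inE permE /b0; case: ifP => e; first by rewrite eqxx.
  move=> sx; have : x \in h @^-1: D by apply: (subsetP ps); rewrite inE.
  by rewrite !inE.
apply/forallP => x; rewrite permE /b0; case: ifP => _; by rewrite ?hs'.
Qed.

Definition blk n t (f : 'I_n.+1 -> 'I_t) (v : vert n t) : 'I_t :=
  match v with inl i => f i | inr j => j end.

Definition cb n t (f : 'I_n.+1 -> 'I_t) (A : {set vert n t}) : bool :=
  [exists x in A, [forall y, (blk f y == blk f x) ==> (y \in A)]].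

Lemma face_cb n t (f : 'I_n.+1 -> 'I_t) (A : {set vert n t}) :
  is_face f A = (A != set0) && ~~ cb f A.
Proof.
rewrite /is_face; congr andb.
apply/existsP/negP.
- case=> B /andP[/existsP[c /andP[ci /eqP EB]] sAB].
  rewrite EB in sAB.
  case/existsP=> x /andP[xA /forallP Hx].
  have : inr (blk f x) \in A by apply: (implyP (Hx (inr _))); rewrite /= eqxx.
  move/(subsetP sAB)/imsetP => [k _]; rewrite /ychoice.
  case ck: (c k) => // -[fk].
  have : inl k \in A by apply: (implyP (Hx (inl k))); rewrite /= -fk.
  move/(subsetP sAB)/imsetP => [k' _]; rewrite /ychoice.
  by case ck': (c k') => // -[ekk]; rewrite ekk ck' in ck.
- move/negP => ncb.
  have ex : forall j, exists v, (blk f v == j) && (v \notin A).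
    move=> j; case: (boolP (inr j \in A)) => hj; last by exists (inr j); rewrite eqxx.
    move: ncb; rewrite negb_exists => /forallP /(_ (inr j)); rewrite hj /=.
    rewrite negb_forall => /existsP[y]; rewrite negb_imply => /andP[e yA].
    by exists y; rewrite e.
  pose m j := odflt (inr j) [pick v | (blk f v == j) && (v \notin A)].
  have mP : forall j, blk f (m j) = j /\ m j \notin A.
    move=> j; rewrite /m; case: pickP => [v /andP[/eqP -> ->] //|H].
    by exfalso; case: (ex j) => v; rewrite H.
  pose c := [ffun i => m (f i) == inl i].
  exists (yset f c); apply/andP; split.
    apply/existsP; exists c; rewrite eqxx andbT.
    apply/injectiveP => i k; rewrite /ychoice !ffunE.
    case: ifP => e1; case: ifP => e2 //.
    - by case=> fe; move/eqP: e2; rewrite -fe (eqP e1); case.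
    - by case.
  apply/subsetP => v vA; apply/imsetP; case: v vA => [i|j] vA.
    exists i => //; rewrite /ychoice ffunE; case: ifP => // e.
    by case: (mP (f i)) => _; rewrite (eqP e) vA.
  case: (mP j) => bm mA; case E: (m j) => [i|j'].
    have fi : f i = j by rewrite E in bm.
    by exists i => //; rewrite /ychoice ffunE fi E eqxx.
  by rewrite E /= in bm; rewrite E bm vA in mA.
Qed.

Definition kp n t (f : 'I_n.+1 -> 'I_t) (s : {perm vert n t}) : bool :=
  [forall x, forall y, (blk f (s x) == blk f (s y)) == (blk f x == blk f y)].

Lemma kpP n t (f : 'I_n.+1 -> 'I_t) (s : {perm vert n t}) :
  kp f s -> forall x y, (blk f (s x) == blk f (s y)) = (blk f x == blk f y).
Proof. by move=> /forallP H x y; have /forallP/(_ y)/eqP := H x. Qed.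

Lemma imsetKV (T : finType) (s : {perm T}) (A : {set T}) : s @: ((s^-1)%g @: A) = A.
Proof.
apply/setP => v; apply/imsetP/idP => [[w /imsetP[u uA ->] ->]|vA].
  by rewrite permKV.
by exists ((s^-1)%g v); [exact: imset_f | rewrite permKV].
Qed.

Lemma cb_kp n t (f : 'I_n.+1 -> 'I_t) (s : {perm vert n t}) (A : {set vert n t}) :
  kp f s -> cb f (s @: A) = cb f A.
Proof.
move=> /kpP H.
apply/idP/idP.
  case/existsP => x' /andP[/imsetP[x xA ->] /forallP Hx].
  apply/existsP; exists x; rewrite xA; apply/forallP => y; apply/implyP => e.
  have := implyP (Hx (s y)); rewrite H e => /(_ isT).
  by rewrite mem_imset //; apply: perm_inj.
case/existsP => x /andP[xA /forallP Hx].
apply/existsP; exists (s x); rewrite imset_f //; apply/forallP => y; apply/implyP => e.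
rewrite -[y](permKV s) imset_f //; apply: (implyP (Hx _)).
by rewrite -H permKV.
Qed.

Lemma aut_dir n t (f : 'I_n.+1 -> 'I_t) (s : {perm vert n t}) :
  is_aut f s -> forall x y, blk f x = blk f y -> blk f (s x) = blk f (s y).
Proof.
move=> aut x y exy.
have Haut : forall A : {set vert n t}, is_face f (s @: A) = is_face f A.
  by move=> A; apply/eqP; apply: (forallP aut A).
set B := [set v | blk f v == blk f x].
have xB : x \in B by rewrite inE.
have cbB : cb f B.
  by apply/existsP; exists x; rewrite xB; apply/forallP => v; apply/implyP; rewrite inE.
have : is_face f (s @: B) = false by rewrite Haut face_cb cbB andbF.
rewrite face_cb imset_eq0.
have -> : B != set0 by apply/set0Pn; exists x.
move=> /= /negbFE /existsP [z /andP[zsB /forallP Hz]].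
set C := [set w | blk f w == blk f z].
have CsB : C \subset s @: B.
  by apply/subsetP => w; rewrite inE => e; apply: (implyP (Hz w)).
set D := (s^-1)%g @: C.
have : is_face f D = false.
  rewrite -Haut imsetKV face_cb.
  have -> : cb f C.
    apply/existsP; exists z; rewrite inE eqxx /=.
    by apply/forallP => v; apply/implyP; rewrite inE.
  by rewrite andbF.
rewrite face_cb imset_eq0.
have -> : C != set0 by apply/set0Pn; exists z; rewrite inE.
move=> /= /negbFE /existsP [w /andP[wD /forallP Hw]].
have wB : blk f w = blk f x.
  case/imsetP: wD => c cC ->.
  case/imsetP: (subsetP CsB c cC) => b bB ->.
  by rewrite permK; move: bB; rewrite inE => /eqP.
have inD : forall v, blk f v = blk f x -> blk f (s v) = blk f z.
  move=> v ev; have : v \in D by apply: (implyP (Hw v)); rewrite wB ev.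
  by case/imsetP => c; rewrite inE => /eqP ec ->; rewrite permKV.
by rewrite !inD.
Qed.

Lemma aut_kp n t (f : 'I_n.+1 -> 'I_t) (s : {perm vert n t}) :
  is_aut f s = kp f s.
Proof.
apply/idP/idP => [aut|ks].
  have autV : is_aut f (s^-1)%g.
    apply/forallP => A; apply/eqP.
    by rewrite -[in RHS](imsetKV s A); apply/esym/eqP; apply: (forallP aut).
  apply/forallP => x; apply/forallP => y; apply/eqP; apply/eqP/eqP => e.
    by have := aut_dir autV e; rewrite !permK.
  exact: (aut_dir aut).
apply/forallP => A; rewrite !face_cb imset_eq0 cb_kp //.
Qed.

Definition Bk n t (f : 'I_n.+1 -> 'I_t) (j : 'I_t) : {set vert n t} :=
  [set v | blk f v == j].

Lemma cardB n t (f : 'I_n.+1 -> 'I_t) j : #|Bk f j| = (part_size f j).+1.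
Proof.
have -> : Bk f j = inr j |: ((@inl 'I_n.+1 'I_t) @: [set i | f i == j]).
  apply/setP => v; case: v => [i|j']; rewrite !inE /=.
    by rewrite (mem_imset _ _ (@inl_inj _ _)) inE.
  have -> : (inr j' \in (@inl 'I_n.+1 'I_t) @: [set i | f i == j]) = false.
    by apply/negbTE/negP => /imsetP[].
  by rewrite orbF.
rewrite cardsU1 card_imset; last exact: inl_inj.
have -> : (inr j \notin (@inl 'I_n.+1 'I_t) @: [set i | f i == j]) = true.
  by apply/negP => /imsetP[].
by [].
Qed.

Definition kpG n t (f : 'I_n.+1 -> 'I_t) : {set {perm vert n t}} :=
  [set s | kp f s].

Lemma kpG_group_set n t (f : 'I_n.+1 -> 'I_t) : group_set (kpG f).
Proof.
apply/group_setP; split.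
  by rewrite inE; apply/forallP => x; apply/forallP => y; rewrite !perm1 eqxx.
move=> s u; rewrite !inE => ks ku.
by apply/forallP => x; apply/forallP => y; rewrite !permM (kpP ku) (kpP ks) eqxx.
Qed.

Canonical kpG_group n t (f : 'I_n.+1 -> 'I_t) := Group (kpG_group_set f).

Definition sig0 n t (f : 'I_n.+1 -> 'I_t) (s : {perm vert n t}) (j : 'I_t) : 'I_t :=
  if kp f s then blk f (s (inr j)) else j.

Lemma sig0_inj n t (f : 'I_n.+1 -> 'I_t) s : injective (sig0 f s).
Proof.
move=> j k; rewrite /sig0; case: ifP => // ks /eqP.
by rewrite (kpP ks) => /eqP.
Qed.

Definition phi n t (f : 'I_n.+1 -> 'I_t) (s : {perm vert n t}) : {perm 'I_t} :=
  perm (@sig0_inj n t f s).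

Lemma phiM n t (f : 'I_n.+1 -> 'I_t) :
  {in kpG f &, {morph phi f : x y / (x * y)%g}}.
Proof.
move=> s u; rewrite !inE => ks ku.
have ksu : kp f (s * u)%g by have := @groupM _ (kpG_group f) s u; rewrite !inE; apply.
apply/permP => j; rewrite permM !permE /sig0 ksu ks ku permM.
by apply/eqP; rewrite (kpP ku) /=.
Qed.

Canonical phi_morph n t (f : 'I_n.+1 -> 'I_t) := Morphism (@phiM n t f).

Lemma cardG n t (f : 'I_n.+1 -> 'I_t) :
  #|kpG f| = #|[set s : {perm vert n t} | [forall v, blk f (s v) == blk f v]]| *
             #|[set sg : {perm 'I_t} | [forall j, part_size f (sg j) == part_size f j]]|.
Proof.
have kerE : kpG f :&: ('ker (phi_morph f))%g =
            [set s : {perm vert n t} | [forall v, blk f (s v) == blk f v]].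
  apply/setP => s; rewrite in_setI [in RHS]inE.
  apply/idP/idP.
    case/andP => ksG kerS.
    have ks : kp f s by rewrite inE in ksG.
    have := kerP (phi_morph f) ksG; move/(_ kerS) => ph1.
    apply/forallP => v.
    have := congr1 (fun p : {perm 'I_t} => p (blk f v)) ph1.
    rewrite /= perm1 permE /sig0 ks => e.
    by rewrite -[X in _ == X]e (kpP ks) /= eqxx.
  move/forallP => H.
  have ks : kp f s.
    by apply/forallP => x; apply/forallP => y; rewrite (eqP (H x)) (eqP (H y)).
  have ksG : s \in kpG f by rewrite inE.
  rewrite ksG /=; apply/kerP => //.
  by apply/permP => j; rewrite permE /sig0 ks perm1; apply/eqP: (H (inr j)).
have imE : (phi_morph f @* kpG f)%g =
           [set sg : {perm 'I_t} | [forall j, part_size f (sg j) == part_size f j]].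
  rewrite morphimEdom; apply/setP => sg; apply/idP/idP.
    case/imsetP => s; rewrite inE => ks ->; rewrite inE.
    apply/forallP => j.
    have E : s @: Bk f j = Bk f (phi f s j).
      apply/setP => w; rewrite permE /sig0 ks !inE; apply/imsetP/idP.
        case=> v; rewrite inE => ev ->; rewrite (kpP ks) /=; exact: ev.
      move=> e; exists ((s^-1)%g w); last by rewrite permKV.
      by rewrite inE -[j]/(blk f (inr j)) -(kpP ks) permKV.
    have := card_imset (Bk f j) (@perm_inj _ s).
    by rewrite E !cardB => -[->].
  rewrite inE => /forallP H.
  have cB : forall j, #|Bk f (sg j)| = #|Bk f j|.
    by move=> j; rewrite !cardB (eqP (H j)).
  pose e j := enum (Bk f j).
  have se : forall j, size (e j) = #|Bk f j| by move=> j; rewrite -cardE.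
  have ve : forall v, v \in e (blk f v) by move=> v; rewrite mem_enum inE.
  have ie : forall v, index v (e (blk f v)) < size (e (sg (blk f v))).
    by move=> v; rewrite se cB -se index_mem.
  pose s0 v := nth v (e (sg (blk f v))) (index v (e (blk f v))).
  have bs0 : forall v, blk f (s0 v) = sg (blk f v).
    move=> v; have := mem_nth v (ie v).
    by rewrite mem_enum inE => /eqP.
  have s0i : injective s0.
    move=> v w E.
    have ebw : blk f v = blk f w.
      by apply: (@perm_inj _ sg); rewrite -!bs0 E.
    move: E; rewrite /s0 ebw.
    rewrite (set_nth_default v w (ie w)) => /eqP.
    have iw := ie w; have iv := ie v; rewrite ebw in iv.
    rewrite nth_uniq ?enum_uniq // => /eqP ei.
    by rewrite -(nth_index v (ve v)) ebw ei (set_nth_default w v) ?nth_index // -?se ?index_mem //; rewrite se -cB -se.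
  pose s := perm s0i.
  have bs : forall v, blk f (s v) = sg (blk f v) by move=> v; rewrite permE bs0.
  have ks : kp f s.
    apply/forallP => x; apply/forallP => y; rewrite !bs.
    by rewrite (inj_eq (@perm_inj _ sg)) eqxx.
  apply/imsetP; exists s; first by rewrite inE.
  by apply/permP => j; rewrite permE /sig0 ks bs.
rewrite -(LagrangeI (kpG_group f) (('ker (phi_morph f))%g)) /= kerE.
by rewrite -imE card_morphim setIid.
Qed.

Theorem proposition2p7 (n t : nat) (f : 'I_n.+1 -> 'I_t) :
  2 <= n ->
  (forall j : 'I_t, exists i : 'I_n.+1, f i = j) ->
  #|AutK f| =
    (\prod_(j < t) (part_size f j).+1`!) *
    \prod_(1 <= u < n.+2) (mult f u)`!.
Proof.
move=> _ surj.
have -> : AutK f = kpG f by apply/setP => s; rewrite !inE aut_kp.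
rewrite cardG; congr (_ * _).
  rewrite Lcount; apply: eq_bigr => j _.
  by rewrite -cardB.
have psb : forall j, part_size f j < n.+2.
  by move=> j; rewrite ltnS /part_size; apply: leq_trans (max_card _) _; rewrite card_ord.
pose h j : 'I_n.+2 := inord (part_size f j).
have -> : [set sg : {perm 'I_t} | [forall j, part_size f (sg j) == part_size f j]] =
          [set sg : {perm 'I_t} | [forall j, h (sg j) == h j]].
  apply/setP => sg; rewrite !inE; apply: eq_forallb => j.
  by rewrite -val_eqE /= !inordK.
rewrite Lcount.
have -> : \prod_(y : 'I_n.+2) #|[set j | h j == y]|`! = \prod_(y < n.+2) (mult f y)`!.
  apply: eq_bigr => y _; congr (_ `!); apply: eq_card => j; rewrite !inE.
  by rewrite -val_eqE /= inordK.
rewrite -(big_mkord xpredT (fun u => (mult f u)`!)) big_ltn //.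
have -> : mult f 0 = 0.
  apply/eqP; rewrite cards_eq0; apply/eqP/setP => j; rewrite !inE.
  case: (surj j) => i fi; rewrite cards_eq0; apply/negbTE/set0Pn.
  by exists i; rewrite inE fi.
by rewrite mul1n.
Qed.
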